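(* Let $\alpha>0$, $t_0>0$, $x_0,v_0\in\mathcal H$, and let $x$ be a solution of the Cauchy problem $$\tfrac{\alpha}{t}\dot x(t)+\operatorname{proj}_{C(x(t))+\ddot x(t)}(0)=0\ (t>t_0),\qquad x(t_0)=x_0,\ \dot x(t_0)=v_0 .$$ Let $z\in\mathcal H$, $\lambda\ge0$ with $\alpha\ge\lambda+1$, and $\xi^*=\lambda(\alpha-1-\lambda)$. For $i=1,\dots,m$ define $$\mathcal E_{i,\lambda,\xi^*}(t)=t^2\big(f_i(x(t))-f_i(z)\big)+\tfrac12\|\lambda(x(t)-z)+t\dot x(t)\|^2+\tfrac{\xi^*}{2}\|x(t)-z\|^2 .$$ Then for all $i$ and almost all $t\in[t_0,+\infty)$, $$\tfrac{d}{dt}\mathcal E_{i,\lambda,\xi^*}(t)\le 2t\big(f_i(x(t))-f_i(z)\big)-t\lambda\min_{j=1,\dots,m}\big(f_j(x(t))-f_j(z)\big)+t(\lambda+1-\alpha)\|\dot x(t)\|^2 .$$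
   Context: $\mathcal H$ is a real Hilbert space. $f_1,\dots,f_m:\mathcal H\to\mathbb R$ are convex and continuously differentiable. $C(x)=\operatorname{co}\{\nabla f_i(x):i=1,\dots,m\}$. For a closed convex $K$, $\operatorname{proj}_K(y)=\arg\min_{w\in K}\|w-y\|^2$. A solution of the Cauchy problem is a function $x:[t_0,+\infty)\to\mathcal H$ such that: $x\in C^1([t_0,+\infty))$; $\dot x$ is absolutely continuous on $[t_0,T]$ for every $T\ge t_0$; there is a Bochner measurable $\ddot x$ with $\dot x(t)=\dot x(t_0)+\int_{t_0}^t\ddot x(s)\,ds$ for all $t$, and $\frac{d}{dt}\dot x=\ddot x$ a.e.; the equation holds for almost all $t\ge t_0$; and the initial conditions hold. *)

(* Defs.v *)
From HB Require Import structures.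
From mathcomp Require Import all_boot all_order all_algebra.
From mathcomp Require Import all_classical all_reals all_analysis.
Set Implicit Arguments. Unset Strict Implicit. Unset Printing Implicit Defensive.
Import Order.TTheory GRing.Theory Num.Theory.
Import numFieldNormedType.Exports.
Local Open Scope classical_set_scope.
Local Open Scope ring_scope.

(* ip is an inner product on the normed space H inducing its norm; together
   with completeness of H (completeNormedModType) this makes H a real Hilbert space. *)
Definition inner_product {R : realType} {H : normedModType R} (ip : H -> H -> R) :=
  [/\ forall x y, ip x y = ip y x,
      forall (a : R) x y z, ip (a *: x + y) z = a * ip x z + ip y z
    & forall x, ip x x = `|x| ^+ 2].

Definition convex_fun {R : realType} {H : normedModType R} (f : H -> R) :=
  forall (x y : H) (s : R), 0 <= s <= 1 ->
    f (s *: x + (1 - s) *: y) <= s * f x + (1 - s) * f y.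

Definition is_gradient {R : realType} {H : normedModType R} (ip : H -> H -> R)
  (f : H -> R) (g : H -> H) :=
  forall x, differentiable f x /\ forall h, 'd f x h = ip (g x) h.

Definition C1_with_gradient {R : realType} {H : normedModType R} (ip : H -> H -> R)
  (f : H -> R) (g : H -> H) := is_gradient ip f g /\ continuous g.

Definition conv_hull {R : realType} {H : normedModType R} (n : nat) (v : 'I_n -> H)
  : set H :=
  [set w | exists mu : 'I_n -> R, (forall i, 0 <= mu i) /\ \sum_(i < n) mu i = 1
                               /\ w = \sum_(i < n) mu i *: v i].

Definition shift_set {R : realType} {H : normedModType R} (K : set H) (a : H) : set H :=
  [set k + a | k in K].

Definition is_proj {R : realType} {H : normedModType R} (K : set H) (y p : H) :=
  K p /\ forall w, K w -> `|p - y| ^+ 2 <= `|w - y| ^+ 2.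

Definition Cset {R : realType} {H : normedModType R} (m : nat) (gradf : 'I_m -> H -> H)
  (x : H) : set H := conv_hull (fun i => gradf i x).

Definition has_deriv_on {R : realType} {H : normedModType R} (I : set R)
  (u v : R -> H) :=
  forall t, I t ->
    (fun h : R => h^-1 *: (u (t + h) - u t)) @
       within (fun h : R => h != 0 /\ I (t + h)) (nbhs (0 : R)) --> v t.

Definition C1_on {R : realType} {H : normedModType R} (I : set R) (u v : R -> H) :=
  has_deriv_on I u v /\ {within I, continuous v}.

Definition abs_cont_on {R : realType} {H : normedModType R} (a b : R) (u : R -> H) :=
  forall eps : R, 0 < eps -> exists2 delta : R, 0 < delta &
    forall (n : nat) (c d : nat -> R),
      (forall k, (k < n)%N -> a <= c k <= d k /\ d k <= b) ->
      (forall k, (k.+1 < n)%N -> d k <= c k.+1) ->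
      \sum_(k < n) (d k - c k) < delta ->
      \sum_(k < n) `|u (d k) - u (c k)| < eps.

(* simple functions R -> H: finite lists of (measurable set, vector) *)
Definition simple_eval {R : realType} {H : normedModType R}
  (s : seq (set R * H)) (t : R) : H :=
  \sum_(p <- s) ((\1_(p.1) t : R) *: p.2).

Definition simple_integral {R : realType} {H : normedModType R}
  (s : seq (set R * H)) : H :=
  \sum_(p <- s) (fine (lebesgue_measure p.1) *: p.2).

Definition simple_on {R : realType} {H : normedModType R} (D : set R)
  (s : seq (set R * H)) :=
  forall p, p \in s -> [/\ measurable p.1, p.1 `<=` D & (lebesgue_measure p.1 < +oo)%E].

Definition bochner_measurable {R : realType} {H : normedModType R} (D : set R)
  (f : R -> H) :=
  exists s : nat -> seq (set R * H), (forall n, simple_on D (s n)) /\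
    {ae (@lebesgue_measure R), forall t, D t ->
        (fun n => simple_eval (s n) t) @ \oo --> f t}.

Definition bochner_integral_is {R : realType} {H : normedModType R} (D : set R)
  (f : R -> H) (v : H) :=
  bochner_measurable D f /\
  exists s : nat -> seq (set R * H), (forall n, simple_on D (s n)) /\
    (fun n => (\int[@lebesgue_measure R]_(t in D) (`|simple_eval (s n) t - f t|)%:E)%E)
      @ \oo --> 0%E /\
    (fun n => simple_integral (s n)) @ \oo --> v.

(* x is a solution of the Cauchy problem
     alpha/t xdot + proj_{C(x) + xddot}(0) = 0,  x(t0) = x0, xdot(t0) = v0,
   with xd its derivative and xdd the Bochner-measurable second derivative. *)
Definition is_solution {R : realType} {H : normedModType R} (m : nat)
  (gradf : 'I_m -> H -> H) (alpha t0 : R) (x0 v0 : H) (x xd xdd : R -> H) :=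
  [/\ C1_on `[t0, +oo[ x xd /\ (forall T, t0 <= T -> abs_cont_on t0 T xd),
      bochner_measurable `[t0, +oo[ xdd
      /\ (forall t, t0 <= t -> bochner_integral_is `[t0, t] xdd (xd t - xd t0)),
      ({ae (@lebesgue_measure R), forall t, t0 <= t -> is_derive t 1 xd (xdd t)}),
      ({ae (@lebesgue_measure R), forall t, t0 < t ->
         is_proj (shift_set (Cset gradf (x t)) (xdd t)) 0 (- ((alpha / t) *: xd t))})
    & x t0 = x0 /\ xd t0 = v0].

(* min_{j=1..m} F j  (m >= 1 is encoded by indexing over 'I_m.+1) *)
Definition minI {R : realType} (m : nat) (F : 'I_m.+1 -> R) : R :=
  \big[Num.min/F ord0]_(j < m.+1) F j.

Definition energy {R : realType} {H : normedModType R} (f : H -> R)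
  (x xd : R -> H) (z : H) (lambda xi : R) (t : R) : R :=
  t ^+ 2 * (f (x t) - f z) + 2^-1 * `|lambda *: (x t - z) + t *: xd t| ^+ 2
  + xi / 2 * `|x t - z| ^+ 2.

(* Main.v *)
Require Import Defs.
From HB Require Import structures.
From mathcomp Require Import all_boot all_order all_algebra.
From mathcomp Require Import all_classical all_reals all_analysis.
From mathcomp Require Import ring lra.
Import Order.TTheory GRing.Theory Num.Theory.
Import numFieldNormedType.Exports.
Local Open Scope classical_set_scope.
Local Open Scope ring_scope.

Section IP.
Variables (R : realType) (H : normedModType R) (ip : H -> H -> R).
Hypothesis ipP : inner_product ip.

Lemma ip_sym x y : ip x y = ip y x.
Proof. by case: ipP. Qed.
Lemma ip_norm x : ip x x = `|x| ^+ 2.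
Proof. by case: ipP. Qed.
Lemma ip_linl a x y z : ip (a *: x + y) z = a * ip x z + ip y z.
Proof. by case: ipP. Qed.
Lemma ip_linr a x y z : ip z (a *: x + y) = a * ip z x + ip z y.
Proof. by rewrite ip_sym ip_linl !(ip_sym z). Qed.
Lemma ip_addl x y z : ip (x + y) z = ip x z + ip y z.
Proof. by rewrite -[x]scale1r ip_linl mul1r scale1r. Qed.
Lemma ip_addr x y z : ip z (x + y) = ip z x + ip z y.
Proof. by rewrite ip_sym ip_addl !(ip_sym z). Qed.
Lemma ip0l z : ip 0 z = 0.
Proof.
have := ip_linl 1 0 0 z; rewrite scale1r addr0 mul1r => h; lra.
Qed.
Lemma ip_scalel a x z : ip (a *: x) z = a * ip x z.
Proof. by have := ip_linl a x 0 z; rewrite addr0 ip0l addr0. Qed.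
Lemma ip_scaler a x z : ip z (a *: x) = a * ip z x.
Proof. by rewrite ip_sym ip_scalel ip_sym. Qed.
Lemma ip_oppl x z : ip (- x) z = - ip x z.
Proof. by rewrite -scaleN1r ip_scalel mulN1r. Qed.
Lemma ip_oppr x z : ip z (- x) = - ip z x.
Proof. by rewrite -scaleN1r ip_scaler mulN1r. Qed.
Lemma ip_subl x y z : ip (x - y) z = ip x z - ip y z.
Proof. by rewrite ip_addl ip_oppl. Qed.
Lemma ip_subr x y z : ip z (x - y) = ip z x - ip z y.
Proof. by rewrite ip_addr ip_oppr. Qed.

Lemma ip_polar x y : ip x y = 2^-1 * (`|x + y| ^+ 2 - `|x| ^+ 2 - `|y| ^+ 2).
Proof.
rewrite -!ip_norm ip_addl !ip_addr (ip_sym y x).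
by field.
Qed.

Lemma ip_cont : continuous (fun p : H * H => ip p.1 p.2).
Proof.
have -> : (fun p : H * H => ip p.1 p.2) =
  (fun p : H * H => 2^-1 * (`|p.1 + p.2| ^+ 2 - `|p.1| ^+ 2 - `|p.2| ^+ 2)).
  by apply/funext => p; rewrite ip_polar.
move=> p.
apply: cvgMl_tmp.
have hf : (fun q : H * H => q.1) @ p --> p.1 by exact: cvg_fst.
have hs : (fun q : H * H => q.2) @ p --> p.2 by exact: cvg_snd.
apply: cvgB; first apply: cvgB.
- rewrite expr2; under eq_fun do rewrite expr2.
  by apply: cvgM; apply: cvg_norm; apply: cvgD.
- rewrite expr2; under eq_fun do rewrite expr2.
  by apply: cvgM; apply: cvg_norm.
- rewrite expr2; under eq_fun do rewrite expr2.
  by apply: cvgM; apply: cvg_norm.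
Qed.

Lemma ip_bilin : bilinear_for (GRing.Scale.Law.clone _ _ *:%R _)
  (GRing.Scale.Law.clone _ _ *:%R _) ip.
Proof. by split => [u'|u] a x y /=; rewrite ?ip_linl ?ip_linr. Qed.

Definition ipB : {bilinear H -> H -> R} :=
  HB.pack ip (bilinear_isBilinear.Build _ _ _ _ _ _ ip ip_bilin).

Lemma derive_ip (a b : R -> H) (t : R) (a' b' : H) :
  is_derive t 1 a a' -> is_derive t 1 b b' ->
  is_derive t 1 (fun s => ip (a s) (b s)) (ip a' (b t) + ip (a t) b').
Proof.
move=> Ha Hb.
have da : differentiable a t by apply/derivable1_diffP; case: Ha.
have db : differentiable b t by apply/derivable1_diffP; case: Hb.
have dp : differentiable (fun s => (a s, b s)) t := differentiable_pair da db.
have dg : differentiable (fun q : H * H => ipB q.1 q.2) (a t, b t).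
  apply: differentiable_bilin; exact: ip_cont.
have dF := differentiable_comp dp dg.
have -> : (fun s => ip (a s) (b s)) = (fun q : H * H => ipB q.1 q.2) \o (fun s => (a s, b s)) by [].
split; first exact/derivable1_diffP.
rewrite deriveE // diff_comp // diff_bilin; last exact: ip_cont.
rewrite /= diff_pair //=.
have ea : 'd a t 1 = a' by rewrite -(deriveE _ da); case: Ha.
have eb : 'd b t 1 = b' by rewrite -(deriveE _ db); case: Hb.
by rewrite ea eb addrC.
Qed.

Lemma derive_compf (phi : H -> R) (u : R -> H) (t : R) (u' : H) :
  differentiable phi (u t) -> is_derive t 1 u u' ->
  is_derive t 1 (fun s => phi (u s)) ('d phi (u t) u').
Proof.
move=> dphi Hu.
have du : differentiable u t by apply/derivable1_diffP; case: Hu.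
have dF := differentiable_comp du dphi.
have -> : (fun s => phi (u s)) = phi \o u by [].
split; first exact/derivable1_diffP.
rewrite deriveE // diff_comp //=.
have ea : 'd u t 1 = u' by rewrite -(deriveE _ du); case: Hu.
by rewrite ea.
Qed.

Lemma grad_ineq (f : H -> R) (g : H -> H) (x z : H) :
  convex_fun f -> is_gradient ip f g -> ip (g x) (z - x) <= f z - f x.
Proof.
move=> cf /(_ x) [dfx dfE].
rewrite -dfE -deriveE //.
have Hd : derivable f x (z - x) by exact: diff_derivable.
set q := (fun h : R => h^-1 *: ((f \o shift x) (h *: (z - x)) - f x)).
have Hq : q @ 0^' --> 'D_(z - x) f x by exact: Hd.
have Hr : q @ 0^'+ --> 'D_(z - x) f x.
  apply: cvg_trans Hq.
  by apply: cvg_app; apply: within_subset => y /= y0; rewrite gt_eqF.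

apply: (cvgr_to_le Hr).
near=> h.
have h0 : 0 < h by near: h; exact: nbhs_right_gt.
have h1 : h < 1 by near: h; exact: nbhs_right_lt.
rewrite /q /=.
have := cf z x h; rewrite (ltW h0) (ltW h1) => /(_ isT).
have -> : h *: z + (1 - h) *: x = h *: (z - x) + x.
  by rewrite scalerBr scalerBl scale1r addrA [RHS]addrAC.
move=> hle.
rewrite ler_pdivrMl //; lra.
Unshelve. all: by end_near. Qed.

Lemma sum_delta n (i : 'I_n) (F : 'I_n -> H) (s : R) :
  \sum_(j < n) (s * (j == i)%:R) *: F j = s *: F i.
Proof.
rewrite (bigD1 i) //= eqxx mulr1 big1 ?addr0 // => j /negbTE ->.
by rewrite mulr0 scale0r.
Qed.

Lemma sum_deltaR n (i : 'I_n) (s : R) :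
  \sum_(j < n) (s * (j == i)%:R) = s.
Proof.
rewrite (bigD1 i) //= eqxx mulr1 big1 ?addr0 // => j /negbTE ->.
by rewrite mulr0.
Qed.

Lemma proj_var (m : nat) (gradf : 'I_m -> H -> H) (y a p : H) :
  is_proj (shift_set (Cset gradf y) a) 0 p ->
  exists mu : 'I_m -> R, [/\ (forall j, 0 <= mu j), \sum_(j < m) mu j = 1,
     p - a = \sum_(j < m) mu j *: gradf j y &
     forall i, 0 <= ip p (gradf i y - (p - a))].
Proof.
case=> [[k [mu [mu0 [mu1 kE]]] kp] pmin].
have pa : p - a = k by rewrite -kp addrK.
exists mu; split => // [|i]; first by rewrite pa.
set c := p - a; set d := gradf i y - c.
rewrite leNgt; apply/negP => Hneg.
set al := - ip p d.
have al0 : 0 < al by rewrite /al oppr_gt0.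
set N := `|d| ^+ 2.
have N0 : 0 <= N by rewrite /N exprn_ge0.
set s := al / (N + al).
have Nal : 0 < N + al by lra.
have s0 : 0 < s by rewrite /s divr_gt0.
have sN : s * (N + al) = al by rewrite /s mulfVK // gt_eqF.
pose mu' := fun j => s * (j == i)%:R + (1 - s) * mu j.
have Kw : shift_set (Cset gradf y) a (p + s *: d).
  exists (p + s *: d - a); last by rewrite subrK.
  have s1 : s <= 1 by rewrite /s ler_pdivrMr // mul1r; lra.
  exists mu'; split.
    move=> j; rewrite /mu'; apply: addr_ge0; apply: mulr_ge0;
      [exact: ltW|exact: ler0n|lra|exact: mu0].
  split.
    by rewrite big_split /= sum_deltaR -mulr_sumr mu1 mulr1 addrC subrK.
  rewrite /mu'; under eq_bigr do rewrite scalerDl.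
  rewrite big_split /= sum_delta.
  under eq_bigr do rewrite -scalerA.
  rewrite -scaler_sumr -kE -pa addrAC -/c /d scalerBr scalerBl scale1r addrCA //.
have := pmin _ Kw; rewrite !subr0 -!ip_norm ip_addl !ip_addr !ip_scalel !ip_scaler.
rewrite (ip_sym d p) !ip_norm -/N.
have e : ip p d = - al by rewrite /al opprK.
rewrite e => Hle.
have H2 : 0 <= s * (2 * - al + s * N) by lra.
have H3 : 0 <= 2 * - al + s * N.
  by rewrite -(pmulr_rge0 _ s0).
nra.
Qed.

Lemma ip_suml n (mu : 'I_n -> R) (g : 'I_n -> H) w :
  ip (\sum_(j < n) mu j *: g j) w = \sum_(j < n) mu j * ip (g j) w.
Proof.
elim/big_rec2: _ => [|j u v _ <-]; first exact: ip0l.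
by rewrite ip_addl ip_scalel.
Qed.

Lemma deriv_interior (x xd : R -> H) (t0 t : R) :
  has_deriv_on `[t0, +oo[ x xd -> t0 < t -> is_derive t 1 x (xd t).
Proof.
move=> Hd tt.
have := Hd t; rewrite /= in_itv /= andbT (ltW tt) => /(_ isT) Ht.
have L : (fun h : R => h^-1 *: (x (h *: 1 + t) - x t)) @ 0^' --> xd t.
  have -> : (fun h : R => h^-1 *: (x (h *: 1 + t) - x t)) =
            (fun h : R => h^-1 *: (x (t + h) - x t)).
    by apply/funext => h; rewrite [_%:A]mulr1 [h + t]addrC.
  apply: cvg_trans Ht; apply: cvg_app => A /= HA.
  have Hn : \forall h \near (0 : R), t0 - t < h by apply: lt_nbhsr; lra.
  rewrite /dnbhs /within; apply: (filterS2 _ _ Hn HA) => h h1 h2 h0.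
  apply: h2; split => //; rewrite /= in_itv /= andbT; lra.
split; first by apply/cvg_ex; exists (xd t).
exact: cvg_lim.
Qed.
End IP.

Arguments ip_sym {R H ip}. Arguments ip_norm {R H ip}. Arguments ip_linl {R H ip}.
Arguments ip_linr {R H ip}. Arguments ip_addl {R H ip}. Arguments ip_addr {R H ip}.
Arguments ip0l {R H ip}. Arguments ip_scalel {R H ip}. Arguments ip_scaler {R H ip}.
Arguments ip_oppl {R H ip}. Arguments ip_oppr {R H ip}. Arguments ip_subl {R H ip}.
Arguments ip_subr {R H ip}. Arguments ip_suml {R H ip}.
Arguments derive_ip {R H ip} ipP {a b t a' b'}.
Arguments derive_compf {R H phi u t u'}.
Arguments deriv_interior {R H x xd t0 t}.
Arguments grad_ineq {R H ip f g x z}.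
Arguments proj_var {R H ip} ipP {m gradf y a p}.

Lemma minI_le (R : realType) m (F : 'I_m.+1 -> R) j : minI F <= F j.
Proof. exact: bigmin_le. Qed.
Arguments minI_le {R m} F j.


Section Dr.
Variable R : realType.
Implicit Types (f g : R -> R) (t : R).
Lemma dD {f g t df dg} : is_derive t 1 f df -> is_derive t 1 g dg ->
  is_derive t (1 : R) (fun s => f s + g s) (df + dg).
Proof. move=> a b; exact: (is_deriveD a b). Qed.
Lemma dM {f g t df dg} : is_derive t 1 f df -> is_derive t 1 g dg ->
  is_derive t (1 : R) (fun s => f s * g s) (f t * dg + g t * df).
Proof. move=> a b; exact: (is_deriveM a b). Qed.
Lemma dK {f t} k {df} : is_derive t 1 f df ->
  is_derive t (1 : R) (fun s => k * f s) (k * df).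
Proof. move=> a; exact: (is_deriveZ k a). Qed.
Lemma dC t (c : R) : is_derive t (1 : R) (fun s => c) 0.
Proof. exact: is_derive_cst. Qed.
Lemma dId t : is_derive t (1 : R) (fun s => s) 1.
Proof. exact: is_derive_id. Qed.
Lemma dsq t : is_derive t (1 : R) (fun s => s ^+ 2) (2 * t).
Proof.
have -> : (fun s : R => s ^+ 2) = (fun s => s * s) by apply/funext => s; rewrite expr2.
apply: is_derive_eq (dM (dId t) (dId t)) _; ring.
Qed.
End Dr.
Arguments dD {R f g t df dg}. Arguments dM {R f g t df dg}. Arguments dK {R f t} k {df}.
Arguments dC {R} t c. Arguments dId {R} t. Arguments dsq {R} t.

Theorem lemma4p11 (R : realType) (H : completeNormedModType R)
  (ip : H -> H -> R) (m : nat) (f : 'I_m.+1 -> H -> R) (gradf : 'I_m.+1 -> H -> H)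
  (alpha t0 : R) (x0 v0 : H) (x xd xdd : R -> H) (z : H) (lambda : R) :
  inner_product ip ->
  (forall i, convex_fun (f i)) ->
  (forall i, C1_with_gradient ip (f i) (gradf i)) ->
  0 < alpha -> 0 < t0 ->
  is_solution gradf alpha t0 x0 v0 x xd xdd ->
  0 <= lambda -> lambda + 1 <= alpha ->
  let xi := lambda * (alpha - 1 - lambda) in
  forall i : 'I_m.+1,
  {ae (@lebesgue_measure R), forall t, t0 <= t ->
    exists2 dE : R, is_derive t 1 (energy (f i) x xd z lambda xi) dE &
      dE <= 2 * t * (f i (x t) - f i z)
            - t * lambda * minI (fun j => f j (x t) - f j z)
            + t * (lambda + 1 - alpha) * `|xd t| ^+ 2}.
Proof.
move=> ipP cvx C1 al0 t00 [[[Hxd _] _] _ Hdd Hproj _] lam0 lam1 xi i.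
have Hne : \forall t \ae (@lebesgue_measure R), t != t0.
  exists [set t0]; split.
  - exact: measurable_set1.
  - exact: lebesgue_measure_set1.
  - by move=> t /= /negP; rewrite negbK => /eqP.
apply: (@filterS3 _ _ (ae_filter_ringOfSetsType _) _ _ _ _ _ Hne Hdd Hproj) => t tne Hddt Hpt tt0.
have tt : t0 < t by rewrite lt_neqAle eq_sym tne.
have tp : 0 < t by exact: lt_trans t00 tt.
have dx : is_derive t 1 x (xd t) := deriv_interior Hxd tt.
have dxd : is_derive t 1 xd (xdd t) := Hddt (ltW tt).
have dv : is_derive t 1 (fun s => x s - z) (xd t - 0) :=
  is_deriveB dx (is_derive_cst z t 1).
have dP := derive_ip ipP dv dv.
have dQ := derive_ip ipP dv dxd.
have dS := derive_ip ipP dxd dxd.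
have [/(_ (x t)) [dfx dfE] _] := C1 i.
have dF := derive_compf dfx dx.
have Eeq : energy (f i) x xd z lambda xi = fun s =>
   s ^+ 2 * (f i (x s) - f i z) + 2^-1 * (lambda ^+ 2 * ip (x s - z) (x s - z)
   + 2 * lambda * (s * ip (x s - z) (xd s)) + s ^+ 2 * ip (xd s) (xd s))
   + xi / 2 * ip (x s - z) (x s - z).
  apply/funext => s; rewrite /energy; move: (x s - z) (xd s) => v u.
  rewrite -!(ip_norm ipP).
  rewrite !(ip_addl ipP) !(ip_addr ipP) !(ip_scalel ipP) !(ip_scaler ipP).
  rewrite (ip_sym ipP u v); ring.
rewrite Eeq.
have dE := dD (dD (dM (dsq t) (dD dF (dC t (- f i z))))
   (dK 2^-1 (dD (dD (dK (lambda ^+ 2) dP) (dK (2 * lambda) (dM (dId t) dQ)))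
      (dM (dsq t) dS)))) (dK (xi / 2) dP).
eexists; first exact: dE.
have [mu [mu0 mu1 cE Hvar]] := proj_var ipP (Hpt tt).
set a := alpha / t in Hvar cE.
have a0 : 0 < a by rewrite /a divr_gt0.
have ta : alpha = t * a by rewrite /a mulrC divfK // gt_eqF.
set c := (- (a *: xd t)) - xdd t in cE Hvar.
have eA : xdd t = - (a *: xd t) - c by rewrite /c opprB addrCA subrr addr0.
have e1 : ip (x t - z) (xdd t) = - (a * ip (x t - z) (xd t)) - ip c (x t - z).
  by rewrite eA (ip_subr ipP) (ip_oppr ipP) (ip_scaler ipP) (ip_sym ipP (x t - z) c).
have e2 : ip (xd t) (xdd t) = - (a * ip (xd t) (xd t)) - ip c (xd t).
  rewrite eA (ip_subr ipP) (ip_oppr ipP) (ip_scaler ipP); congr (_ - _); exact: ip_sym.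
have e3 : ip (gradf i (x t)) (xd t) - ip c (xd t) <= 0.
  move: (Hvar i); rewrite (ip_subr ipP) (ip_oppl ipP) (ip_scalel ipP).
  rewrite !(ip_oppl ipP) !(ip_scalel ipP) (ip_sym ipP (xd t) (gradf i (x t))) (ip_sym ipP (xd t) c) => h.
  nra.
have e4 : minI (fun j => f j (x t) - f j z) <= ip c (x t - z).
  rewrite cE (ip_suml ipP) -[minI _]mul1r -mu1 mulr_suml.
  apply: ler_sum => j _; apply: ler_wpM2l; first exact: mu0.
  apply: le_trans (minI_le _ j) _.
  have := grad_ineq (x:=x t) (z:=z) (cvx j) (C1 j).1.
  rewrite -opprB (ip_oppr ipP); lra.
rewrite !subr0 dfE (ip_sym ipP (xd t) (x t - z)) (ip_sym ipP (xdd t) (xd t)) e1 e2.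
rewrite -(ip_norm ipP (xd t)) /xi ta.
have h1 : t ^+ 2 * (ip (gradf i (x t)) (xd t) - ip c (xd t)) <= 0.
  by apply: mulr_ge0_le0 => //; exact: sqr_ge0.
have h2 : t * lambda * minI (fun j => f j (x t) - f j z) <= t * lambda * ip c (x t - z).
  by apply: ler_wpM2l => //; apply: mulr_ge0 => //; exact: ltW.
lra.
Qed.
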